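(* If $\mathcal{M}_\times\perp\mathsf{L}E$, then also $\mathcal{M}_\Sigma\perp\mathsf{L}E$.
   Context: $\mathcal{E}$ is a locally cartesian closed category with a dominance: a class of monos (the $\Sigma$-monos) closed under pullback, identities and composition, classified by $\top:1\to\Sigma$. $\mathsf{L}E=\sum_{\phi:\Sigma}E^\phi$ is the associated partial map classifier: maps $X\to\mathsf{L}E$ correspond to pairs of a $\Sigma$-mono $U\to X$ and a map $U\to E$. For a mono $m:I\to J$, $m\perp E$ means every map $I\to E$ extends uniquely along $m$; $\mathcal{N}\perp E$ means $m\perp E$ for all $m\in\mathcal{N}$. Given a class $\mathcal{M}$ of monos, $\mathcal{M}_\times$ is the smallest class of monos containing $\mathcal{M}$ and stable under products (with arbitrary objects), and $\mathcal{M}_\Sigma$ is the smallest class of monos containing $\mathcal{M}_\times$ and stable under pullback along $\Sigma$-monos. *)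

(* Defs.v *)
Set Implicit Arguments.
Unset Strict Implicit.

Record Category := {
  Ob :> Type;
  Hom : Ob -> Ob -> Type;
  cid : forall X, Hom X X;
  comp : forall X Y Z, Hom Y Z -> Hom X Y -> Hom X Z;
  comp_id_l : forall X Y (f : Hom X Y), comp (cid Y) f = f;
  comp_id_r : forall X Y (f : Hom X Y), comp f (cid X) = f;
  comp_assoc : forall X Y Z W (h : Hom Z W) (g : Hom Y Z) (f : Hom X Y),
      comp h (comp g f) = comp (comp h g) f
}.

Arguments Hom {C} X Y : rename.
Arguments cid {C} X : rename.
Arguments comp {C X Y Z} g f : rename.
Notation "g \o f" := (comp g f) (at level 40, left associativity).

Section Defs.
Variable C : Category.

Definition mclass := forall X Y : C, Hom X Y -> Prop.

Definition is_mono (X Y : C) (m : Hom X Y) : Prop :=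
  forall Z (a b : Hom Z X), m \o a = m \o b -> a = b.

Definition is_terminal (T : C) : Prop :=
  forall X : C, exists! t : Hom X T, True.

Definition is_pullback (A B K : C) (f : Hom A K) (g : Hom B K)
    (P : C) (p1 : Hom P A) (p2 : Hom P B) : Prop :=
  f \o p1 = g \o p2 /\
  forall Z (a : Hom Z A) (b : Hom Z B), f \o a = g \o b ->
    exists! h : Hom Z P, p1 \o h = a /\ p2 \o h = b.

Definition is_product (A B P : C) (p1 : Hom P A) (p2 : Hom P B) : Prop :=
  forall Z (a : Hom Z A) (b : Hom Z B),
    exists! h : Hom Z P, p1 \o h = a /\ p2 \o h = b.

Definition has_terminal : Prop := exists T : C, is_terminal T.

Definition has_pullbacks : Prop :=
  forall (A B K : C) (f : Hom A K) (g : Hom B K),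
    exists (P : C) (p1 : Hom P A) (p2 : Hom P B), is_pullback f g p1 p2.

(** Dependent products Pi_f (right adjoint to pullback along f : A -> B),
    stated through their universal property: for p : Y -> A there is
    q : P -> B together with an evaluation map ev : f^*P -> Y over A such that
    every h : f^*Z -> Y over A (for r : Z -> B) factors uniquely. *)
Definition has_dependent_products : Prop :=
  forall (A B : C) (f : Hom A B) (Y : C) (p : Hom Y A),
  exists (P : C) (q : Hom P B) (Q : C) (q1 : Hom Q P) (q2 : Hom Q A)
         (ev : Hom Q Y),
    is_pullback q f q1 q2 /\ p \o ev = q2 /\
    forall (Z : C) (r : Hom Z B) (W : C) (w1 : Hom W Z) (w2 : Hom W A)
           (h : Hom W Y),
      is_pullback r f w1 w2 -> p \o h = w2 ->
      exists! k : Hom Z P,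
        q \o k = r /\
        forall t : Hom W Q, q1 \o t = k \o w1 -> q2 \o t = w2 -> ev \o t = h.

Definition is_lccc : Prop :=
  has_terminal /\ has_pullbacks /\ has_dependent_products.

Definition is_dominance (D : mclass) (One Sig : C) (top : Hom One Sig) : Prop :=
  (forall X Y (m : Hom X Y), D X Y m -> is_mono m) /\
  (forall (A B K : C) (m : Hom A K) (g : Hom B K) (P : C)
          (p1 : Hom P A) (p2 : Hom P B),
      D A K m -> is_pullback m g p1 p2 -> D P B p2) /\
  (forall X : C, D X X (cid X)) /\
  (forall X Y Z (m : Hom X Y) (n : Hom Y Z), D X Y m -> D Y Z n -> D X Z (n \o m)) /\
  is_terminal One /\ D One Sig top /\
  (forall U X (m : Hom U X), D U X m ->
     exists! chi : Hom X Sig,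
       exists t : Hom U One, is_pullback top chi t m).

(** LE (with generic partial map eta : E -> LE) is the partial map classifier
    of E for the dominance D: maps X -> LE correspond (by pullback of eta)
    to pairs of a D-mono U -> X and a map U -> E. *)
Definition is_partial_map_classifier (D : mclass) (E LE : C) (eta : Hom E LE) : Prop :=
  D E LE eta /\
  forall (X U : C) (u : Hom U X) (f : Hom U E), D U X u ->
    exists! chi : Hom X LE, is_pullback chi eta u f.

Definition orth (I J : C) (m : Hom I J) (E : C) : Prop :=
  forall f : Hom I E, exists! g : Hom J E, g \o m = f.

Definition orth_class (N : mclass) (E : C) : Prop :=
  forall I J (m : Hom I J), N I J m -> orth m E.

(** M_x : smallest class containing M and stable under products with
    arbitrary objects X (m : I -> J  gives  m x X : I x X -> J x X,
    for any choice of the products). *)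
Inductive Mtimes (M : mclass) : mclass :=
| Mtimes_base : forall I J (m : Hom I J), M I J m -> Mtimes M m
| Mtimes_prod : forall I J (m : Hom I J) (X P Q : C)
      (p1 : Hom P I) (p2 : Hom P X) (q1 : Hom Q J) (q2 : Hom Q X)
      (m' : Hom P Q),
    Mtimes M m -> is_product p1 p2 -> is_product q1 q2 ->
    q1 \o m' = m \o p1 -> q2 \o m' = p2 -> Mtimes M m'.

Inductive MSigma (D : mclass) (M : mclass) : mclass :=
| MSigma_base : forall I J (m : Hom I J), Mtimes M m -> MSigma D M m
| MSigma_pb : forall I J J' (m : Hom I J) (s : Hom J' J) (P : C)
      (p1 : Hom P I) (p2 : Hom P J'),
    MSigma D M m -> D J' J s -> is_pullback m s p1 p2 -> MSigma D M p2.

End Defs.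

(* Main.v *)
Require Import Defs.

Section Aux.
Variable C : Category.

Lemma pb_swap (A B K : C) (f : Hom A K) (g : Hom B K) P (p1 : Hom P A) (p2 : Hom P B) :
  is_pullback f g p1 p2 -> is_pullback g f p2 p1.
Proof.
  intros [Hc Hu]. split; [symmetry; exact Hc|].
  intros Z a b Hab. destruct (Hu Z b a (eq_sym Hab)) as [h [[H1 H2] U]].
  exists h. split; [split; assumption|]. intros h' [H1' H2']. apply U; split; assumption.
Qed.

Lemma classify_unique (D : mclass C) One Sig (top : Hom One Sig) E LE (eta : Hom E LE)
  X V (G G' : Hom X LE) (v : Hom V X) (e : Hom V E) :
  is_dominance D top -> is_partial_map_classifier D eta ->
  is_pullback G eta v e -> is_pullback G' eta v e -> G = G'.
Proof.
  intros dom [Deta Hcl] HG HG'.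
  assert (Dv : D V X v).
  { destruct dom as [_ [Hpb _]]. eapply Hpb. 2: apply pb_swap; exact HG. exact Deta. }
  destruct (Hcl X V v e Dv) as [chi [_ U]].
  rewrite <- (U G HG). apply U. exact HG'.
Qed.

Lemma restr_mono (X X' V LE E : C) (G : Hom X LE) (eta : Hom E LE) (s : Hom X' X) (v : Hom V X') (e : Hom V E) :
  is_mono s -> is_pullback G eta (s \o v) e -> is_pullback (G \o s) eta v e.
Proof.
  intros Hs [Hc Hu]. split.
  - rewrite <- comp_assoc. exact Hc.
  - intros Z a b Hab. rewrite <- comp_assoc in Hab.
    destruct (Hu Z (s \o a) b Hab) as [c [[Hc1 Hc2] Uc]].
    exists c. split.
    + split; [apply Hs; rewrite comp_assoc; exact Hc1 | exact Hc2].
    + intros c' [H1 H2]. apply Uc. split; [rewrite <- comp_assoc, H1; reflexivity | exact H2].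
Qed.

Lemma restr_pb (I J J' V U P LE E E' : C) (G : Hom J LE) (eta : Hom E LE)
  (s : Hom J' J) (v : Hom V J') (e : Hom V E) (m : Hom I J)
  (p1 : Hom P I) (p2 : Hom P J') (u : Hom U P) (e' : Hom U E) :
  is_mono s -> is_pullback G eta (s \o v) e -> is_pullback m s p1 p2 ->
  is_pullback ((G \o s) \o p2) eta u e' -> is_pullback (G \o m) eta (p1 \o u) e'.
Proof.
  intros Hs [Gc Gu] [Pc Pu] [Qc Qu]. split.
  - rewrite <- Qc. rewrite <- !comp_assoc. rewrite (comp_assoc m p1 u), Pc.
    rewrite <- comp_assoc. reflexivity.
  - intros Z a b Hab. rewrite <- comp_assoc in Hab.
    destruct (Gu Z (m \o a) b Hab) as [c [[Hc1 Hc2] Uc]].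
    assert (E1 : m \o a = s \o (v \o c)) by (rewrite comp_assoc; symmetry; exact Hc1).
    destruct (Pu Z a (v \o c) E1) as [d [[Hd1 Hd2] Ud]].
    assert (E2 : ((G \o s) \o p2) \o d = eta \o b).
    { rewrite <- !comp_assoc, Hd2, (comp_assoc s v c), comp_assoc, Gc, <- comp_assoc, Hc2.
      reflexivity. }
    destruct (Qu Z d b E2) as [z [[Hz1 Hz2] Uz]].
    exists z. split.
    + split; [rewrite <- comp_assoc, Hz1; exact Hd1 | exact Hz2].
    + intros z' [H1 H2]. apply Uz. split; [|exact H2].
      rewrite <- comp_assoc in H1.
      symmetry. apply Ud. split; [exact H1|].
      apply Hs. rewrite (comp_assoc s p2), <- Pc, <- comp_assoc, H1, E1. reflexivity.
Qed.
End Aux.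

Theorem mainTheorem13 (C : Category) (D : mclass C) (One Sig : C)
    (top : Hom One Sig) (E LE : C) (eta : Hom E LE) (M : mclass C) :
  is_lccc C ->
  is_dominance D top ->
  is_partial_map_classifier D eta ->
  (forall I J (m : Hom I J), M I J m -> is_mono m) ->
  orth_class (Mtimes M) LE ->
  orth_class (MSigma D M) LE.
Proof.
  intros lccc dom pmc Mmono orthM I J m Hm.
  induction Hm as [I J m Hm | I J J' m s P p1 p2 Hm IH Ds Hpb].
  - apply orthM; exact Hm.
  - destruct lccc as [_ [HPB _]].
    pose proof dom as [Dmono [Dpb [_ [Dcomp _]]]].
    pose proof pmc as [Deta Hcl].
    assert (Hs : is_mono s) by (apply Dmono; exact Ds).
    assert (Dp1 : D P I p1) by (eapply Dpb; [exact Ds | apply pb_swap; exact Hpb]).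
    assert (Hp1 : is_mono p1) by (apply Dmono; exact Dp1).
    intro f.
    destruct (HPB _ _ _ f eta) as [U [u [e Hfu]]].
    assert (Du : D U P u) by (eapply Dpb; [exact Deta | apply pb_swap; exact Hfu]).
    assert (Hext : forall g : Hom J' LE, g \o p2 = f ->
              exists G : Hom J LE, G \o s = g /\ is_pullback (G \o m) eta (p1 \o u) e).
    { intros g Hg.
      destruct (HPB _ _ _ g eta) as [V [v [ev Hgv]]].
      assert (Dv : D V J' v) by (eapply Dpb; [exact Deta | apply pb_swap; exact Hgv]).
      destruct (Hcl J V (s \o v) ev (Dcomp _ _ _ _ _ Dv Ds)) as [G [HG _]].
      assert (HGs : G \o s = g).
      { eapply classify_unique; [exact dom | exact pmc | | exact Hgv].
        eapply restr_mono; eassumption. }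
      exists G. split; [exact HGs|].
      eapply (@restr_pb C I J J' V U P LE E E G eta s v ev m p1 p2 u e); [exact Hs | exact HG | exact Hpb |].
      rewrite HGs, Hg. exact Hfu. }
    destruct (Hcl I U (p1 \o u) e (Dcomp _ _ _ _ _ Du Dp1)) as [F [HF _]].
    destruct (IH F) as [g' [Hg' _]].
    assert (Fp1 : F \o p1 = f).
    { eapply classify_unique; [exact dom | exact pmc | | exact Hfu].
      eapply restr_mono; eassumption. }
    exists (g' \o s). split.
    + rewrite <- comp_assoc, <- (proj1 Hpb), comp_assoc, Hg'. exact Fp1.
    + intros g2 Hg2.
      assert (Hg1 : (g' \o s) \o p2 = f).
      { rewrite <- comp_assoc, <- (proj1 Hpb), comp_assoc, Hg'. exact Fp1. }
      destruct (Hext _ Hg1) as [G1 [HG1s HG1m]].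
      destruct (Hext _ Hg2) as [G2 [HG2s HG2m]].
      assert (EGm : G1 \o m = G2 \o m)
        by (eapply classify_unique; [exact dom | exact pmc | exact HG1m | exact HG2m]).
      destruct (IH (G1 \o m)) as [h [_ Uh]].
      assert (G1 = G2) as <-.
      { transitivity h; [symmetry; apply Uh; reflexivity | apply Uh; symmetry; exact EGm]. }
      rewrite <- HG1s, <- HG2s. reflexivity.
Qed.
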